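(* Let $K$ be a $\mathcal{CR}(D/\Phi(D))$-module, regarded as a $D$-module via $D\to D/\Phi(D)$. Then $\mathrm{H}^1(D,K)\cong\mathrm{H}^1(D/\Phi(D),K)\oplus\mathrm{F}_p^{\binom d2}$.
   Context: $p$ is an odd prime, $d\ge2$, and $D=\langle y_1,\dots,y_d\rangle$ is a finite $p$-group of exponent $p$ and class $2$ with $|D/\Phi(D)|=p^d$ and $|\Phi(D)/\gamma_3(D)|=p^{\binom d2}$. For a finite $p$-group $L$, an $\mathrm{F}_p(L)$-module $M$ is called a $\mathcal{CR}(L)$-module if $C_M(L)\cong\mathrm{F}_p$ and $\mathrm{H}^1(L,M)$ has order at most $p$. *)

(* Defs.v *)
From HB Require Import structures.
From mathcomp Require Import all_boot all_order all_algebra all_fingroup all_solvable.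
From mathcomp Require Import mxrepresentation.
Set Implicit Arguments. Unset Strict Implicit. Unset Printing Implicit Defensive.
Import GRing.Theory.

(* Cochains with values in the row space 'rV['F_p]_n (the underlying space of
   an F_p-module of dimension n). *)
Definition cochain (gT : finGroupType) (p n : nat) := {ffun gT -> 'rV['F_p]_n}.
HB.instance Definition _ gT p n := GRing.Zmodule.on (cochain gT p n).
HB.instance Definition _ gT p n := Finite.on (cochain gT p n).
Definition cochain_group (gT : finGroupType) (p n : nat) : finGroupType :=
  FinRing.Zmodule_to_finGroup (cochain gT p n).

Local Open Scope ring_scope.

(* The group L (a subset of the ambient finGroupType gT) acts on the right on
   'rV['F_p]_n through rho: v |-> v *m rho x (MathComp convention for matrix
   representations).  Cochains are required to vanish outside L, so that
   they are exactly the functions L -> F_p^n. *)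

Definition Z1 (gT : finGroupType) (p n : nat) (L : {set gT})
    (rho : gT -> 'M['F_p]_n) : {set cochain_group gT p n} :=
  [set f : cochain_group gT p n |
     [forall x, (x \notin L) ==> (f x == 0)] &&
     [forall x in L, forall y in L, f (x * y)%g == f x *m rho y + f y]].
Arguments Z1 {gT} p {n} L rho.

Definition B1 (gT : finGroupType) (p n : nat) (L : {set gT})
    (rho : gT -> 'M['F_p]_n) : {set cochain_group gT p n} :=
  [set f : cochain_group gT p n | [exists v : 'rV['F_p]_n,
     [forall x, f x == (if x \in L then v *m rho x - v else 0)]]].
Arguments B1 {gT} p {n} L rho.

Definition H1 (gT : finGroupType) (p n : nat) (L : {set gT})
    (rho : gT -> 'M['F_p]_n) :=
  (Z1 p L rho / B1 p L rho)%g.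
Arguments H1 {gT} p {n} L rho.

Definition CR_module (gT : finGroupType) (p : nat) (L : {group gT}) (n : nat)
    (rG : mx_representation 'F_p L n) : Prop :=
  \rank (rfix_mx rG L) = 1%N /\ (#|H1 p L rG| <= p)%N.
Arguments CR_module {gT} p L {n} rG.

Definition Fp_space (p m : nat) : finGroupType :=
  FinRing.Zmodule_to_finGroup 'rV['F_p]_m.

(* Main.v *)
Require Import Defs.
From mathcomp Require Import all_boot all_order all_algebra all_fingroup all_solvable all_character.
From mathcomp Require Import mxrepresentation mxabelem ring zify.
Set Implicit Arguments. Unset Strict Implicit. Unset Printing Implicit Defensive.
Import GRing.Theory.
Local Open Scope group_scope.

Section Coch.
Variables (gT : finGroupType) (p n : nat).
Local Notation CG := (cochain_group gT p n).

Lemma cgM (f g : CG) : f * g = (f + g)%R. Proof. by []. Qed.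
Lemma cg1 : (1 : CG) = 0%R. Proof. by []. Qed.
Lemma cgV (f : CG) : f^-1 = (- f)%R. Proof. by []. Qed.
Lemma cgX (f : CG) k : f ^+ k = (f *+ k)%R.
Proof. by elim: k => [|k IH]; rewrite ?expg0 ?mulr0n // expgS IH mulrS. Qed.

Lemma cg_abelem (pr : prime p) (A : {group CG}) : p.-abelem A.
Proof.
apply/abelemP => //; split.
  by apply/centsP => f _ g _; rewrite /commute !cgM addrC.
move=> f _; rewrite cgX cg1; apply/ffunP => x; rewrite ffunMnE ffunE.
apply/rowP => j; rewrite -scaler_nat; move: (pchar_Fp pr) => /andP[_ /eqP ->]; by rewrite scale0r.
Qed.

Lemma cg_norm (B : {set CG}) (x : CG) : x \in 'N(B).
Proof.
rewrite inE; apply/subsetP => z /imsetP[z' zB ->].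
suff -> : z' ^ x = z' by [].
by rewrite conjgE !cgM cgV addrC addrK.
Qed.

Variables (L : {group gT}) (rho : gT -> 'M['F_p]_n).

Lemma Z1_gs : group_set (Z1 p L rho).
Proof.
apply/group_setP; split.
  rewrite inE; apply/andP; split.
    by apply/forallP=> x; rewrite cg1 ffunE eqxx implybT.
  by apply/forall_inP => x _; apply/forall_inP => y _; rewrite cg1 !ffunE mul0mx addr0.
move=> f g /[!inE] /andP[/forallP f0 /forall_inP fc] /andP[/forallP g0 /forall_inP gc].
apply/andP; split.
  apply/forallP => x; apply/implyP => xL; rewrite cgM ffunE.
  by rewrite (eqP (implyP (f0 x) xL)) (eqP (implyP (g0 x) xL)) addr0.
apply/forall_inP => x xL; apply/forall_inP => y yL; rewrite cgM !ffunE.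
move/forall_inP: (fc x xL) => /(_ y yL) /eqP ->.
move/forall_inP: (gc x xL) => /(_ y yL) /eqP ->.
by rewrite mulmxDl addrACA.
Qed.
Canonical Z1_group := Group Z1_gs.

Lemma B1_gs : group_set (B1 p L rho).
Proof.
apply/group_setP; split.
  rewrite inE; apply/existsP; exists 0%R; apply/forallP => x.
  by rewrite ffunE mul0mx subrr; case: ifP.
move=> f g /[!inE] /existsP[v /forallP fv] /existsP[w /forallP gw].
apply/existsP; exists (v + w)%R; apply/forallP => x; rewrite cgM ffunE.
rewrite (eqP (fv x)) (eqP (gw x)); case: ifP; rewrite ?addr0 //.
by rewrite mulmxDl opprD addrACA.
Qed.
Canonical B1_group := Group B1_gs.

Hypothesis rhoM : {in L &, {morph rho : x y / x * y >-> (x *m y)%R}}.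

Lemma B1_sub_Z1 : B1 p L rho \subset Z1 p L rho.
Proof.
apply/subsetP => f /[!inE] /existsP[v /forallP fv].
apply/andP; split.
  by apply/forallP => x; apply/implyP => xL; rewrite (eqP (fv x)) (negbTE xL).
apply/forall_inP => x xL; apply/forall_inP => y yL.
rewrite (eqP (fv _)) (eqP (fv x)) (eqP (fv y)) groupM // xL yL rhoM //.
by rewrite mulmxBl mulmxA addrA subrK.
Qed.

Lemma card_H1 : (#|H1 p L rho| * #|B1 p L rho|)%N = #|Z1 p L rho|.
Proof.
have sBZ := B1_sub_Z1.
have cZ : abelian (Z1 p L rho).
  by apply/centsP => f _ g _; rewrite /commute !cgM addrC.
rewrite /H1 card_quotient ?(sub_abelian_norm cZ) // mulnC.
by rewrite (Lagrange sBZ).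
Qed.

End Coch.


Fixpoint PS (I : Type) (V : zmodType) (s : seq I) (F : I -> I -> V) : V :=
  match s with [::] => 0%R | i :: s' => (\sum_(j <- s') F i j + PS s' F)%R end.

Lemma expFpD (gT : finGroupType) p (pr : prime p) (g : gT) (x y : 'F_p) :
  g ^+ p = 1 -> g ^+ (x + y)%R = g ^+ x * g ^+ y.
Proof.
move=> gp; have gq : g ^+ (Zp_trunc (pdiv p)).+2 = 1 by rewrite Fp_cast.
by rewrite -expgD -[RHS](expg_mod _ gq).
Qed.

Lemma zmod5 (V : zmodType) (A B C X Y : V) :
  (A + B + (X + Y + C) = A + C + X + (B + Y))%R.
Proof.
pose F := fun i => nth 0%R [:: A; B; X; Y; C] i.
have h : (\sum_(i <- [:: 0; 1; 2; 3; 4]%N) F i = \sum_(i <- [:: 0; 4; 2; 1; 3]%N) F i)%R.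
  by apply: perm_big.
move: h; rewrite !big_cons big_nil /F /= !addr0 !addrA => ->.
by [].
Qed.

Section PSlemmas.
Local Open Scope ring_scope.
Variables (I : eqType) (V W : zmodType).

Lemma PS_ext (s : seq I) (F G : I -> I -> V) :
  (forall i j, F i j = G i j) -> PS s F = PS s G.
Proof.
move=> FG; elim: s => [|i s IH] //=; rewrite IH; congr (_ + _).
by apply: eq_bigr => j _; rewrite FG.
Qed.

Lemma PS_morph (s : seq I) (F : I -> I -> V) (f : V -> W) :
  f 0 = 0 -> {morph f : x y / x + y} -> f (PS s F) = PS s (fun i j => f (F i j)).
Proof.
move=> f0 fD; elim: s => [|i s IH] //=; rewrite fD IH; congr (_ + _).
exact: (big_morph f fD f0).
Qed.

Lemma PS_add (s : seq I) (F G : I -> I -> V) :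
  PS s (fun i j => F i j + G i j) = PS s F + PS s G.
Proof.
elim: s => [|i s IH] /=; first by rewrite addr0.
by rewrite IH big_split /= addrACA.
Qed.

Lemma PS_opp (s : seq I) (F : I -> I -> V) :
  PS s (fun i j => - F i j) = - PS s F.
Proof.
elim: s => [|i s IH] /=; first by rewrite oppr0. by rewrite IH sumrN opprD.
Qed.

Lemma PS_sub (s : seq I) (F G : I -> I -> V) :
  PS s (fun i j => F i j - G i j) = PS s F - PS s G.
Proof. by rewrite PS_add PS_opp. Qed.

Lemma PS0 (s : seq I) : PS s (fun _ _ => 0 : V) = 0.
Proof. by elim: s => [|i s IH] //=; rewrite IH big1 ?addr0. Qed.

Lemma PS_uniq_ext (s : seq I) (F G : I -> I -> V) : uniq s ->
  (forall i j, i != j -> F i j = G i j) -> PS s F = PS s G.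
Proof.
move=> + FG; elim: s => [|i s IH] //= /andP[ni us]; rewrite IH //; congr (_ + _).
rewrite big_seq_cond [in RHS]big_seq_cond; apply: eq_bigr => j /andP[js _].
by apply: FG; apply: contraNneq ni => ->.
Qed.

End PSlemmas.


Section Main.
Variables (gT : finGroupType) (p : nat) (D : {group gT}) (n : nat).
Variable K : mx_representation 'F_p (D / 'Phi(D))%G n.
Hypotheses (pr : prime p) (oddp : odd p) (pD : p.-group D) (expD : exponent D = p)
  (cl2 : nil_class D = 2).
Hypothesis CR : CR_module p (D / 'Phi(D))%G K.
Hypothesis ntE : (D / 'Phi(D))%G :!=: 1.
Hypothesis ntP : 'Phi(D)%G :!=: 1.



Lemma Mho1_triv : 'Mho^1(D) = 1.
Proof.
rewrite (MhoE 1 pD); apply/trivgP; rewrite gen_subG; apply/subsetP => z /imsetP[x xD ->].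
by rewrite expn1 -expD expg_exponent // inE.
Qed.

Lemma Phi_der : 'Phi(D) = D^`(1).
Proof. by rewrite (Phi_joing pD) Mho1_triv joingG1. Qed.

Lemma der_cent : D^`(1) \subset 'C(D).
Proof.
apply/commG1P; rewrite -lcn2 -lcnSn.
by apply/(lcn_nil_classP 2 (pgroup_nil pD)); rewrite cl2.
Qed.

Lemma Phi_centD u x : u \in 'Phi(D) -> x \in D -> commute u x.
Proof.
rewrite Phi_der => uD xD; exact: (centP (subsetP der_cent u uD)).
Qed.

Lemma commD_Phi x y : x \in D -> y \in D -> [~ x, y] \in 'Phi(D).
Proof. by move=> xD yD; rewrite Phi_der mem_commg. Qed.

Lemma PhiD_sub : 'Phi(D) \subset D. Proof. exact: Phi_sub. Qed.

Lemma D_normPhi : D \subset 'N('Phi(D)).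
Proof. exact: normal_norm (Phi_normal D). Qed.

Lemma expDp x : x \in D -> x ^+ p = 1.
Proof. by move=> xD; rewrite -expD expg_exponent. Qed.

Lemma conj_PhiD u x : u \in 'Phi(D) -> x \in D -> u ^ x = u.
Proof. by move=> uP xD; rewrite conjgE (Phi_centD uP xD) mulKg. Qed.

Lemma commMD x y z : x \in D -> y \in D -> z \in D ->
  [~ x * y, z] = [~ x, z] * [~ y, z].
Proof. by move=> xD yD zD; rewrite commMgJ conj_PhiD ?commD_Phi. Qed.

Lemma commXXD x y i j : x \in D -> y \in D -> [~ x ^+ i, y ^+ j] = [~ x, y] ^+ (i * j).
Proof.
move=> xD yD; apply: commXXg.
  exact/esym/Phi_centD/xD/commD_Phi.
exact/esym/Phi_centD/yD/commD_Phi.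
Qed.


Section Coll.
Variables (I : Type) (y : I -> gT).
Hypothesis yD : forall i, y i \in D.
Variable lam : gT -> 'F_p.
Hypothesis lamM : {in 'Phi(D) &, {morph lam : x y / x * y >-> (x + y)%R}}.

Lemma lam1 : lam 1 = 0%R.
Proof.
have := lamM (group1 _) (group1 _); rewrite mulg1 => /esym /eqP.
by rewrite -subr_eq0 addrK => /eqP.
Qed.

Lemma lamX u k : u \in 'Phi(D) -> lam (u ^+ k) = (k%:R * lam u)%R.
Proof.
move=> uP; elim: k => [|k IH]; first by rewrite expg0 lam1 mul0r.
by rewrite expgS lamM ?groupX // IH -{1}[lam u]mul1r -mulrDl -natr1 addrC.
Qed.

Definition eprod (s : seq I) (A : I -> nat) := \prod_(i <- s) y i ^+ A i.

Lemma eprodD s A : eprod s A \in D.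
Proof. by apply: group_prod => i _; rewrite groupX. Qed.

Lemma lam_comm s A z k : z \in D ->
  lam [~ eprod s A, z ^+ k] = (\sum_(j <- s) (A j * k)%:R * lam [~ y j, z])%R.
Proof.
move=> zD; elim: s => [|j s IH].
  by rewrite /eprod !big_nil comm1g lam1.
rewrite /eprod !big_cons -/(eprod s A) commMD ?groupX ?eprodD //.
rewrite lamM ?commD_Phi ?groupX ?eprodD // IH commXXD //.
by rewrite lamX ?commD_Phi.
Qed.

Lemma collect s A B : exists2 w, w \in 'Phi(D) &
  eprod s A * eprod s B = eprod s (fun i => A i + B i)%N * w /\
  lam w = PS s (fun i j => ((A j * B i)%:R * lam [~ y j, y i])%R).
Proof.
elim: s => [|i s [w wP [Ew lw]]].
  by exists 1; rewrite ?group1 // /eprod !big_nil mulg1 lam1.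
set c := [~ eprod s A, y i ^+ B i].
have cP : c \in 'Phi(D) by rewrite commD_Phi ?groupX ?eprodD.
exists (w * c); first by rewrite groupM.
split; last by rewrite lamM // lw lam_comm //= addrC.
rewrite /eprod !big_cons -!/(eprod s _) expgD.
have h1 : eprod s A * y i ^+ B i = y i ^+ B i * eprod s A * c by rewrite commgC.
have h2 : c * eprod s B = eprod s B * c by apply: Phi_centD; rewrite ?eprodD.
rewrite -mulgA [eprod s A * _]mulgA h1.
by rewrite -(mulgA _ c) h2 !mulgA -(mulgA (y i ^+ A i * y i ^+ B i)) Ew !mulgA.
Qed.

End Coll.

Local Notation P := 'Phi(D).
Local Notation E := (D / 'Phi(D))%G.
Definition rho x := K (coset P x).

Lemma cosetD x : x \in D -> coset P x \in E.
Proof. exact: mem_quotient. Qed.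

Lemma cosetM x y : x \in D -> y \in D -> coset P (x * y) = coset P x * coset P y.
Proof.
by move=> xD yD; rewrite morphM // ?(subsetP D_normPhi).
Qed.

Lemma cosetV x : x \in D -> coset P x^-1 = (coset P x)^-1.
Proof. by move=> xD; rewrite morphV // (subsetP D_normPhi). Qed.

Lemma rhoM : {in D &, {morph rho : x y / x * y >-> (x *m y)%R}}.
Proof. by move=> x y xD yD; rewrite /rho cosetM // repr_mxM ?cosetD. Qed.

Lemma rhoP u : u \in P -> rho u = (1%:M)%R.
Proof. by move=> uP; rewrite /rho coset_id // repr_mx1. Qed.

Lemma liftE xi : xi \in E -> exists2 x, x \in D & coset P x = xi.
Proof.
by case/morphimP => x _ xD ->; exists x.
Qed.

Definition wpick := [pick v : 'rV['F_p]_n | (v <= rfix_mx K E)%MS && (v != 0)%R].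
Definition w := odflt 0%R wpick.

Lemma w_prop : (w <= rfix_mx K E)%MS /\ (w != 0)%R.
Proof.
rewrite /w /wpick; case: pickP => [v /andP[] //|none].
have [r1 _] := CR.
have : (rfix_mx K E != 0)%R by rewrite -mxrank_eq0 r1.
case/rowV0Pn => v vs vn; by move: (none v); rewrite vs vn.
Qed.

Lemma w_neq0 : (w != 0)%R. Proof. by case: w_prop. Qed.

Lemma wK xi : xi \in E -> (w *m K xi = w)%R.
Proof. by move=> xiE; case: w_prop => /rfix_mxP-> //. Qed.

Lemma wrho x : x \in D -> (w *m rho x = w)%R.
Proof. by move=> xD; rewrite /rho wK ?cosetD. Qed.

Definition coef (v : 'rV['F_p]_n) : 'F_p := ((v *m pinvmx w) 0 0)%R.

Lemma sub_w v : (v <= rfix_mx K E)%MS -> v = (coef v *: w)%R.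
Proof.
move=> vs; have [ws wn] := w_prop.
have [r1 _] := CR.
have : (rfix_mx K E <= w)%MS.
  have := mxrank_leqif_eq ws; rewrite r1 rank_rV wn => /leqif_refl /andP[].
  by [].
move=> fw; have vw := submx_trans vs fw.
by rewrite /coef -mul_scalar_mx -mx11_scalar mulmxKpV.
Qed.

Lemma coefD v v' : coef (v + v') = (coef v + coef v')%R.
Proof. by rewrite /coef mulmxDl mxE. Qed.

Lemma coefZ a : coef (a *: w) = a.
Proof.
have [ws wn] := w_prop.
have e : ((coef (a *: w) - a) *: w = 0)%R.
  by rewrite scalerBl -sub_w ?subrr // scalemx_sub.
apply/eqP; rewrite -subr_eq0; move/eqP: e; by rewrite scaler_eq0 (negbTE wn) orbF.
Qed.



Definition abE := Phi_quotient_abelem pD.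
Definition aE := abelem_rV abE ntE.
Definition rE := rVabelem abE ntE.

Local Notation m := (abelem_dim' (gval (D / 'Phi(D))%G)).+1.
Local Open Scope ring_scope.

Definition ax x := aE (coset P x).

Lemma axM x y : x \in D -> y \in D -> ax (x * y)%g = ax x + ax y.
Proof. by move=> xD yD; rewrite /ax /aE cosetM // abelem_rV_M ?cosetD. Qed.

Lemma axP u : u \in P -> ax u = 0.
Proof. by move=> uP; rewrite /ax /aE coset_id // abelem_rV_1. Qed.

Definition ypick (i : 'I_m) := [pick x in D | coset P x == rE (delta_mx 0 i)].
Definition yg i := odflt 1%g (ypick i).

Lemma yg_prop i : yg i \in D /\ coset P (yg i) = rE (delta_mx 0 i).
Proof.
rewrite /yg /ypick; case: pickP => [x /andP[xD /eqP] //|none].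
have := mem_rVabelem abE ntE (delta_mx 0 i).
case/liftE => x xD ex; by move: (none x); rewrite xD ex eqxx.
Qed.

Lemma ygD i : yg i \in D. Proof. by case: (yg_prop i). Qed.

Definition eE (a : 'rV['F_p]_m) := eprod yg (index_enum 'I_m) (fun i => nat_of_ord (a 0 i)).

Lemma eE_D a : eE a \in D.
Proof. exact/eprodD/ygD. Qed.

Lemma coset_eE a : coset P (eE a) = rE a.
Proof.
rewrite /eE /eprod (morph_prod [morphism of coset P]); last first.
  by move=> i _; rewrite (subsetP D_normPhi) // groupX ?ygD.
rewrite {2}(row_sum_delta a) (big_morph rE (rVabelemD abE ntE) (rVabelem0 abE ntE)).
apply: eq_bigr => i _; rewrite morphX ?(subsetP D_normPhi) ?ygD //.
by case: (yg_prop i) => _ e; rewrite /rE rVabelemZ -[rVabelem _ _ _]e.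
Qed.

Lemma ax_eE a : ax (eE a) = a.
Proof. by rewrite /ax /aE coset_eE /rE rVabelemK. Qed.

Lemma uxP x : x \in D -> ((eE (ax x))^-1 * x)%g \in P.
Proof.
move=> xD; have nD := subsetP D_normPhi.
apply: coset_idr; first by rewrite groupM ?groupV ?nD ?eE_D.
have h : coset P x = (coset P (eE (ax x)) * coset P ((eE (ax x))^-1 * x))%g.
  by rewrite -cosetM ?groupM ?groupV ?eE_D // mulKVg.
move: h; rewrite coset_eE /rE /ax /aE abelem_rV_K ?cosetD //.
by move/(congr1 (mulg (coset P x)^-1)); rewrite mulKg mulVg.
Qed.

Local Notation CGE := (cochain_group (coset_of P) p n).

Definition phi (i j : 'I_m) (st : 'F_p * 'F_p) : CGE :=
  [ffun xi => if xi \in E then (st.1 * aE xi 0 i + st.2 * aE xi 0 j) *: w else 0].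

Lemma phi_Z1 i j st : phi i j st \in Z1 p E K.
Proof.
rewrite inE; apply/andP; split.
  by apply/forallP => xi; apply/implyP => xin; rewrite ffunE (negbTE xin).
apply/forall_inP => xi xiE; apply/forall_inP => et etE.
rewrite !ffunE groupM // xiE etE /aE abelem_rV_M // -scalemxAl wK // -scalerDl !mxE.
by apply/eqP; congr (_ *: w); ring.
Qed.

Lemma phi_sub i j st st' :
  (phi i j st * (phi i j st')^-1)%g = phi i j (st.1 - st'.1, st.2 - st'.2).
Proof.
rewrite cgM cgV; apply/ffunP => xi; rewrite !ffunE.
case: ifP => _; last by rewrite subrr.
by rewrite -scalerBl; congr (_ *: w); rewrite /=; ring.
Qed.

Lemma pair_exists i j : i != j ->
  exists stu : 'F_p * 'F_p * 'rV['F_p]_n,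
    ((stu.1.1, stu.1.2) != (0, 0)) &&
    [forall x in D, stu.2 *m rho x - stu.2 == (stu.1.1 * ax x 0 i + stu.1.2 * ax x 0 j) *: w].
Proof.
move=> ij.
pose mp := fun st => coset (B1 p E K) (phi i j st).
have : ~~ injectiveb mp.
  apply/negP => /injectiveP inj.
  have sub : [set mp st | st in setT] \subset H1 p E K.
    by apply/subsetP => z /imsetP[st _ ->]; rewrite mem_quotient ?phi_Z1.
  have := subset_leq_card sub; rewrite card_imset // cardsT card_prod card_Fp //.
  have [_ cr] := CR => le1; have := leq_trans le1 cr.
  by have := prime_gt1 pr; nia.
case/injectivePn => st [st' neq eqm].
move: eqm; rewrite /mp => /rcoset_kercosetP.
rewrite !cg_norm => /(_ isT isT); rewrite mem_rcoset phi_sub inE => /existsP[v /forallP hv].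
exists ((st.1 - st'.1, st.2 - st'.2), v); apply/andP; split.
  apply: contra neq; rewrite xpair_eqE !subr_eq0 => /andP[/eqP e1 /eqP e2].
  by apply/eqP; rewrite [st]surjective_pairing [st']surjective_pairing e1 e2.
apply/forall_inP => x xD; have := hv (coset P x); rewrite !ffunE cosetD //= => /eqP <-.
by [].
Qed.

Definition gpick (i j : 'I_m) := [pick stu : 'F_p * 'F_p * 'rV['F_p]_n |
    ((stu.1.1, stu.1.2) != (0, 0)) &&
    [forall x in D, stu.2 *m rho x - stu.2 == (stu.1.1 * ax x 0 i + stu.1.2 * ax x 0 j) *: w]].
Definition gst i j := odflt ((0, 0), 0) (gpick i j).
Definition sA i j := (gst i j).1.1.
Definition tA i j := (gst i j).1.2.
Definition uA i j := (gst i j).2.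

Lemma gst_ok i j : i != j -> ((sA i j, tA i j) != (0, 0)) /\
  forall x, x \in D -> uA i j *m rho x - uA i j = (sA i j * ax x 0 i + tA i j * ax x 0 j) *: w.
Proof.
move=> ij; rewrite /sA /tA /uA /gst /gpick; case: pickP => [stu /andP[nz /forall_inP h]|none].
  by split => // x xD; apply/eqP/h.
by have [stu hs] := pair_exists ij; move: (none stu); rewrite hs.
Qed.

Definition bet i j (a : 'rV['F_p]_m) :=
  if sA i j != 0 then (sA i j)^-1 * a 0 j else - (tA i j)^-1 * a 0 i.
Definition alp i j (a : 'rV['F_p]_m) := sA i j * a 0 i + tA i j * a 0 j.

Lemma betD i j a b : bet i j (a + b) = bet i j a + bet i j b.
Proof. by rewrite /bet !mxE; case: ifP => _; ring. Qed.

Lemma bet0 i j : bet i j 0 = 0.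
Proof. by rewrite /bet !mxE; case: ifP => _; ring. Qed.

Lemma alpD i j a b : alp i j (a + b) = alp i j a + alp i j b.
Proof. by rewrite /alp !mxE; ring. Qed.

Lemma key i j a b : i != j ->
  bet i j a * alp i j b - bet i j b * alp i j a = a 0 j * b 0 i - b 0 j * a 0 i.
Proof.
move=> ij; have [nz _] := gst_ok ij; rewrite /bet /alp.
case: ifP => [sn | /negbFE/eqP s0].
  by field.
have tn : tA i j != 0.
  by apply: contra nz => /eqP t0; rewrite s0 t0.
by rewrite s0; field.
Qed.

Lemma two_neq0 : (2%:R : 'F_p) != 0.
Proof.
rewrite -(dvdn_pcharf (pchar_Fp pr)); apply/negP => /dvdn_leq le2.
have := prime_gt1 pr => gt1; have p2 : p = 2%N by apply/eqP; rewrite eqn_leq le2 ?gt1.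
by move: oddp; rewrite p2.
Qed.

Definition s0 := index_enum 'I_m.

Lemma eE0 : eE 0 = 1%g.
Proof. by rewrite /eE /eprod big1 // => i _; rewrite mxE expg0. Qed.

Section Lam.
Variable lam : gT -> 'F_p.
Hypothesis lamM : {in P &, {morph lam : x y / (x * y)%g >-> x + y}}.

Definition kap j i := lam [~ yg j, yg i]%g.
Definition Gf a b := PS s0 (fun i j => kap j i * bet i j a * alp i j b).
Definition Bl (a b : 'rV['F_p]_m) := PS s0 (fun i j => kap j i * (a 0 j * b 0 i)).
Definition Nf a b := Gf a b - Bl a b.
Definition Qf a := Nf a a / 2%:R.
Definition cf x := Qf (ax x) + lam ((eE (ax x))^-1 * x)%g.

Lemma NfDl a a' b : Nf (a + a') b = Nf a b + Nf a' b.
Proof.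
rewrite /Nf /Gf /Bl -!PS_sub -PS_add; apply: PS_ext => i j.
by rewrite betD !mxE; ring.
Qed.

Lemma NfDr a b b' : Nf a (b + b') = Nf a b + Nf a b'.
Proof.
rewrite /Nf /Gf /Bl -!PS_sub -PS_add; apply: PS_ext => i j.
by rewrite alpD !mxE; ring.
Qed.

Lemma Nf_sym a b : Nf a b = Nf b a.
Proof.
apply/eqP; rewrite -subr_eq0; apply/eqP.
rewrite /Nf /Gf /Bl -!PS_sub.
rewrite (@PS_uniq_ext _ _ _ _ (fun _ _ => 0)) ?PS0 ?index_enum_uniq // => i j ij.
have := key a b ij; move=> h.
transitivity (kap j i * ((bet i j a * alp i j b - bet i j b * alp i j a)
   - (a 0 j * b 0 i - b 0 j * a 0 i))); first by ring.
by rewrite h subrr mulr0.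
Qed.

Lemma Nf0 b : Nf 0 b = 0.
Proof. by have := NfDl 0 0 b; rewrite addr0 => /esym /eqP; rewrite -subr_eq0 addrK => /eqP. Qed.

Lemma QfD a b : Qf (a + b) = Qf a + Qf b + Nf a b.
Proof.
rewrite /Qf NfDl !NfDr (Nf_sym b a).
have t := two_neq0; field; by [].
Qed.

Lemma eE_add (a b : 'rV['F_p]_m) : eprod yg s0 (fun i => addn (nat_of_ord (a 0 i)) (nat_of_ord (b 0 i))) = eE (a + b).
Proof.
rewrite /eE /eprod; apply: eq_bigr => i _.
by rewrite mxE (expFpD pr) ?expDp ?ygD // expgD.
Qed.

Lemma cfM x y : x \in D -> y \in D -> cf (x * y)%g = cf x + cf y + Gf (ax x) (ax y).
Proof.
move=> xD yD; rewrite /cf axM //.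
set a := ax x; set b := ax y.
set ux := ((eE a)^-1 * x)%g; set uy := ((eE b)^-1 * y)%g.
have uxin : ux \in P by rewrite /ux /a uxP.
have uyin : uy \in P by rewrite /uy /b uxP.
have [w0 w0P [Ew lw]] := collect ygD lamM s0 (fun i => nat_of_ord (a 0 i)) (fun i => nat_of_ord (b 0 i)).
rewrite eE_add in Ew.
have ex : x = (eE a * ux)%g by rewrite /ux mulKVg.
have ey : y = (eE b * uy)%g by rewrite /uy mulKVg.
have -> : ((eE (a + b))^-1 * (x * y))%g = (w0 * ux * uy)%g.
  have cu : (ux * eE b = eE b * ux)%g by apply: Phi_centD; rewrite ?eE_D.
  rewrite {1}ex {1}ey [(eE a * ux * _)%g]mulgA -(mulgA (eE a)) cu [(eE a * (eE b * ux))%g]mulgA.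
  by rewrite (Ew : (eE a * eE b)%g = _) -!mulgA mulKg !mulgA.
rewrite (lamM (groupM w0P uxin) uyin) (lamM w0P uxin) lw QfD /Nf.
have -> : PS s0 (fun i j => ((nat_of_ord (a 0 j) * nat_of_ord (b 0 i))%:R * lam [~ yg j, yg i]%g))
   = Bl a b.
  by apply: PS_ext => i j; rewrite natrM !natr_Zp mulrC.
by ring.
Qed.

Definition Flam : cochain_group gT p n := [ffun x => if x \in D then
  PS s0 (fun i j => (kap j i * bet i j (ax x)) *: uA i j) + cf x *: w else 0].

Lemma Flam_Z1 : Flam \in Z1 p D rho.
Proof.
rewrite inE; apply/andP; split.
  by apply/forallP => x; apply/implyP => xn; rewrite ffunE (negbTE xn).
apply/forall_inP => x xD; apply/forall_inP => y yD.
rewrite !ffunE groupM // xD yD axM // cfM //.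
set a := ax x; set b := ax y.
rewrite mulmxDl (@PS_morph _ _ _ _ _ (fun v => v *m rho y)) ?mul0mx //; last first.
  by move=> v v'; rewrite mulmxDl.
rewrite -scalemxAl wrho //.
rewrite (@PS_uniq_ext _ _ _ (fun i j => (kap j i * bet i j a) *: uA i j *m rho y)
   (fun i j => (kap j i * bet i j a) *: uA i j +
     (kap j i * bet i j a * alp i j b) *: w)) ?index_enum_uniq //; last first.
  move=> i j ij; have [_ h] := gst_ok ij.
  rewrite -scalemxAl; move: (h y yD); rewrite -/b => /eqP; rewrite subr_eq => /eqP ->.
  by rewrite scalerDr scalerA addrC.
rewrite PS_add -(@PS_morph _ _ _ _ _ (fun c => c *: w)) ?scale0r //; last first.
  by move=> c c'; rewrite scalerDl.
rewrite (@PS_ext _ _ _ (fun i j => (kap j i * bet i j (a + b)) *: uA i j)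
   (fun i j => (kap j i * bet i j a) *: uA i j + (kap j i * bet i j b) *: uA i j)); last first.
  by move=> i j; rewrite betD mulrDr scalerDl.
rewrite PS_add !scalerDl.
apply/eqP; rewrite -/(Gf a b); exact: zmod5.
Qed.

Lemma Flam_P u : u \in P -> Flam u = lam u *: w.
Proof.
move=> uP; have uD := subsetP PhiD_sub u uP.
rewrite ffunE uD /cf axP // eE0 invg1 mul1g.
rewrite (@PS_ext _ _ _ _ (fun _ _ => 0)) ?PS0; last by move=> i j; rewrite bet0 mulr0 scale0r.
by rewrite add0r /Qf Nf0 mul0r add0r.
Qed.

End Lam.

Definition HomSet : {set {ffun gT -> 'F_p}} :=
  [set lam : {ffun gT -> 'F_p} | [forall x, (x \notin P) ==> (lam x == 0)] &&
     [forall x in P, forall y in P, lam (x * y)%g == lam x + lam y]].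

Lemma homM lam : lam \in HomSet -> {in P &, {morph lam : x y / (x * y)%g >-> x + y}}.
Proof.
rewrite inE => /andP[_ /forall_inP h] x y xP yP.
by move/forall_inP: (h x xP) => /(_ y yP) /eqP.
Qed.

Lemma hom0 lam x : lam \in HomSet -> x \notin P -> lam x = 0.
Proof. by rewrite inE => /andP[/forallP h _] xn; apply/eqP; apply: (implyP (h x)). Qed.

Definition infl (g : CGE) : cochain_group gT p n :=
  [ffun x => if x \in D then g (coset P x) else 0].

Lemma Z1_vanish (g : CGE) xi : g \in Z1 p E K -> xi \notin E -> g xi = 0.
Proof. by rewrite inE => /andP[/forallP h _] xn; apply/eqP; apply: (implyP (h xi)). Qed.

Lemma Z1_cocycle (g : CGE) xi et : g \in Z1 p E K -> xi \in E -> et \in E ->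
  g (xi * et)%g = g xi *m K et + g et.
Proof.
rewrite inE => /andP[_ /forall_inP h] xiE etE.
by move/forall_inP: (h xi xiE) => /(_ et etE) /eqP.
Qed.

Lemma Z1D_vanish (f : cochain_group gT p n) x : f \in Z1 p D rho -> x \notin D -> f x = 0.
Proof. by rewrite inE => /andP[/forallP h _] xn; apply/eqP; apply: (implyP (h x)). Qed.

Lemma Z1D_cocycle (f : cochain_group gT p n) x y : f \in Z1 p D rho -> x \in D -> y \in D ->
  f (x * y)%g = f x *m rho y + f y.
Proof.
rewrite inE => /andP[_ /forall_inP h] xD yD.
by move/forall_inP: (h x xD) => /(_ y yD) /eqP.
Qed.

Lemma Z1_at1 (g : CGE) : g \in Z1 p E K -> g 1%g = 0.
Proof.
move=> gZ; have := Z1_cocycle gZ (group1 E) (group1 E).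
rewrite mulg1 repr_mx1 mulmx1 => /esym /eqP; rewrite -subr_eq0 addrK => /eqP.
by [].
Qed.

Lemma infl_Z1 g : g \in Z1 p E K -> infl g \in Z1 p D rho.
Proof.
move=> gZ; rewrite inE; apply/andP; split.
  by apply/forallP => x; apply/implyP => xn; rewrite ffunE (negbTE xn).
apply/forall_inP => x xD; apply/forall_inP => y yD.
by rewrite !ffunE groupM // xD yD cosetM // Z1_cocycle ?cosetD.
Qed.

Lemma infl_inj : {in Z1 p E K &, injective infl}.
Proof.
move=> g g' gZ g'Z e; apply/ffunP => xi.
have [xiE | xin] := boolP (xi \in E); last by rewrite !Z1_vanish.
have [x xD <-] := liftE xiE.
by move/ffunP: e => /(_ x); rewrite !ffunE xD.
Qed.

Lemma infl_P g u : g \in Z1 p E K -> u \in P -> infl g u = 0.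
Proof.
move=> gZ uP; rewrite ffunE (subsetP PhiD_sub u uP) coset_id //.
exact: Z1_at1.
Qed.

Definition lift (xi : coset_of P) := odflt 1%g [pick x in D | coset P x == xi].

Lemma lift_prop xi : xi \in E -> lift xi \in D /\ coset P (lift xi) = xi.
Proof.
move=> xiE; rewrite /lift; case: pickP => [x /andP[xD /eqP] //|none].
have [x xD ex] := liftE xiE; by move: (none x); rewrite xD ex eqxx.
Qed.

Lemma Z1D_cosetE (h : cochain_group gT p n) x x' : h \in Z1 p D rho ->
  (forall u, u \in P -> h u = 0) -> x \in D -> x' \in D -> coset P x = coset P x' -> h x = h x'.
Proof.
move=> hZ hP xD x'D e.
have uP : (x'^-1 * x)%g \in P.
  apply: coset_idr; first by rewrite (subsetP D_normPhi) // groupM ?groupV.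
  by rewrite cosetM ?groupV // cosetV // -e mulVg.
have -> : x = (x' * (x'^-1 * x))%g by rewrite mulKVg.
by rewrite (Z1D_cocycle hZ x'D (subsetP PhiD_sub _ uP)) rhoP // mulmx1 (hP _ uP) addr0.
Qed.

Definition Psi (gl : CGE * {ffun gT -> 'F_p}) : cochain_group gT p n :=
  (infl gl.1 * Flam gl.2)%g.

Lemma Psi_Z1 gl : gl \in setX (Z1 p E K) HomSet -> Psi gl \in Z1 p D rho.
Proof.
rewrite inE => /andP[gZ lH]; rewrite /Psi groupM ?infl_Z1 //.
exact: (Flam_Z1 (homM lH)).
Qed.

Lemma Psi_P gl u : gl \in setX (Z1 p E K) HomSet -> u \in P -> Psi gl u = gl.2 u *: w.
Proof.
rewrite inE => /andP[gZ lH] uP; rewrite /Psi cgM ffunE infl_P // add0r.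
exact: Flam_P.
Qed.

Lemma Psi_inj : {in setX (Z1 p E K) HomSet &, injective Psi}.
Proof.
move=> [g l] [g' l'] gl gl' e.
have el : l = l'.
  apply/ffunP => x; have [xP|xn] := boolP (x \in P).
    have := Psi_P gl xP; rewrite e (Psi_P gl' xP) /= => h.
    by rewrite -(coefZ (l x)) -h coefZ.
  by move: gl gl'; rewrite !in_setX => /andP[_ lH] /andP[_ lH']; rewrite !hom0.
move: e; rewrite /Psi /= el => /mulIg e'.
move: gl gl'; rewrite !in_setX => /andP[gZ _] /andP[g'Z _].
by rewrite (infl_inj gZ g'Z e').
Qed.

Lemma Z1D_eq : Z1 p D rho = Psi @: setX (Z1 p E K) HomSet.
Proof.
apply/eqP; rewrite eqEsubset; apply/andP; split; last first.
  by apply/subsetP => f /imsetP[gl glX ->]; apply: Psi_Z1.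
apply/subsetP => f fZ.
have fP u : u \in P -> (f u <= rfix_mx K E)%MS.
  move=> uP; have uD := subsetP PhiD_sub u uP.
  apply/rfix_mxP => xi xiE; have [x xD <-] := liftE xiE.
  have e1 := Z1D_cocycle fZ uD xD; have e2 := Z1D_cocycle fZ xD uD.
  rewrite (Phi_centD uP xD) e2 rhoP // mulmx1 addrC in e1.
  by move/addIr: e1 => <-.
pose l := [ffun x => if x \in P then coef (f x) else 0] : {ffun gT -> 'F_p}.
have lH : l \in HomSet.
  rewrite inE; apply/andP; split.
    by apply/forallP => x; apply/implyP => xn; rewrite ffunE (negbTE xn).
  apply/forall_inP => x xP; apply/forall_inP => y yP.
  rewrite !ffunE groupM // xP yP Z1D_cocycle ?(subsetP PhiD_sub) //.
  by rewrite rhoP // mulmx1 coefD.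
pose h := (f * (Flam l)^-1)%g.
have hZ : h \in Z1 p D rho by rewrite groupM ?groupV ?(Flam_Z1 (homM lH)).
have hP u : u \in P -> h u = 0.
  move=> uP; rewrite /h cgM cgV ffunE ffunE Flam_P // ffunE uP.
  by rewrite -sub_w ?fP // subrr.
have hdef : f = (h * Flam l)%g by rewrite /h mulgKV.
clearbody h.
pose g := [ffun xi => if xi \in E then h (lift xi) else 0] : CGE.
have ig : infl g = h.
  apply/ffunP => x; rewrite !ffunE.
  have [xD|xn] := boolP (x \in D); last by rewrite Z1D_vanish.
  rewrite cosetD //; have [lD le] := lift_prop (cosetD xD).
  exact: Z1D_cosetE.
have gZ : g \in Z1 p E K.
  rewrite inE; apply/andP; split.
    by apply/forallP => xi; apply/implyP => xn; rewrite ffunE (negbTE xn).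
  apply/forall_inP => xi xiE; apply/forall_inP => et etE.
  have [lxD lxe] := lift_prop xiE; have [leD lee] := lift_prop etE.
  have [lxeD lxee] := lift_prop (groupM xiE etE).
  rewrite !ffunE groupM // xiE etE.
  rewrite (@Z1D_cosetE h _ (lift xi * lift et)%g) ?groupM //; last by rewrite cosetM // lxe lee.
  by rewrite Z1D_cocycle // /rho lee.
apply/imsetP; exists (g, l); first by rewrite inE gZ lH.
by rewrite /Psi /= ig.
Qed.

Lemma card_Z1D : #|Z1 p D rho| = (#|Z1 p E K| * #|HomSet|)%N.
Proof. by rewrite Z1D_eq card_in_imset ?cardsX //; apply: Psi_inj. Qed.

Lemma B1D_eq : B1 p D rho = infl @: B1 p E K.
Proof.
apply/eqP; rewrite eqEsubset; apply/andP; split.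
  apply/subsetP => f; rewrite inE => /existsP[v /forallP hv].
  apply/imsetP; exists [ffun xi => if xi \in E then v *m K xi - v else 0].
    by rewrite inE; apply/existsP; exists v; apply/forallP => xi; rewrite ffunE.
  apply/ffunP => x; rewrite (eqP (hv x)) !ffunE.
  by case: ifP => // xD; rewrite cosetD.
apply/subsetP => f /imsetP[g]; rewrite inE => /existsP[v /forallP hv] ->.
rewrite inE; apply/existsP; exists v; apply/forallP => x; rewrite ffunE.
by case: ifP => // xD; rewrite (eqP (hv _)) cosetD.
Qed.

Lemma card_B1 : #|B1 p D rho| = #|B1 p E K|.
Proof.
rewrite B1D_eq card_in_imset // => g g' gB g'B.
have sBZ := B1_sub_Z1 (repr_mxM K).
by apply: infl_inj; apply: (subsetP sBZ).
Qed.

Lemma abP : p.-abelem 'Phi(D)%G.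
Proof.
apply/abelemP => //; split.
  by apply/centsP => u uP v vP; apply: Phi_centD uP (subsetP PhiD_sub v vP).
by move=> u uP; apply: expDp (subsetP PhiD_sub u uP).
Qed.

Local Notation mP := (abelem_dim' (gval 'Phi(D)%G)).+1.
Definition aP := abelem_rV abP ntP.
Definition rP := rVabelem abP ntP.

Definition hv (v : 'rV['F_p]_mP) : {ffun gT -> 'F_p} :=
  [ffun x => if x \in P then \sum_k v 0 k * aP x 0 k else 0].

Lemma hv_Hom v : hv v \in HomSet.
Proof.
rewrite inE; apply/andP; split.
  by apply/forallP => x; apply/implyP => xn; rewrite ffunE (negbTE xn).
apply/forall_inP => x xP; apply/forall_inP => y yP.
rewrite !ffunE groupM // xP yP /aP abelem_rV_M // -big_split /=.
by apply/eqP; apply: eq_bigr => k _; rewrite mxE mulrDr.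
Qed.

Lemma aP_delta k : aP (rP (delta_mx 0 k)) = delta_mx 0 k.
Proof. by rewrite /aP /rP rVabelemK. Qed.

Lemma hv_inj : injective hv.
Proof.
move=> v v' e; apply/rowP => k.
move/ffunP: e => /(_ (rP (delta_mx 0 k))); rewrite !ffunE mem_rVabelem aP_delta.
rewrite (bigD1 k) // [in RHS](bigD1 k) //= !big1 ?addr0.
- by rewrite !mxE !eqxx !mulr1.
- by move=> j jk; rewrite mxE (negbTE jk) andbF mulr0.
by move=> j jk; rewrite mxE (negbTE jk) andbF mulr0.
Qed.

Lemma HomSet_eq : HomSet = hv @: setT.
Proof.
apply/eqP; rewrite eqEsubset; apply/andP; split; last first.
  by apply/subsetP => l /imsetP[v _ ->]; apply: hv_Hom.
apply/subsetP => l lH; have lM := homM lH.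
apply/imsetP; exists (\row_k l (rP (delta_mx 0 k))); first by rewrite inE.
apply/ffunP => x; rewrite ffunE; case: ifP => xP; last by rewrite hom0 ?xP.
pose mu u := l (rP u).
have muD : {morph mu : u v / u + v}.
  by move=> u v; rewrite /mu /rP rVabelemD lM ?mem_rVabelem.
have mu0 : mu 0 = 0 by rewrite /mu /rP rVabelem0 (lam1 lM).
have -> : l x = mu (aP x) by rewrite /mu /aP /rP abelem_rV_K.
rewrite {1}(row_sum_delta (aP x)) (big_morph mu muD mu0).
apply: eq_bigr => k _; rewrite /mu /rP rVabelemZ (lamX lM) ?mem_rVabelem // natr_Zp.
by rewrite mxE mulrC.
Qed.

Lemma card_HomSet : #|HomSet| = #|'Phi(D)|.
Proof.
rewrite HomSet_eq card_imset; last exact: hv_inj.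
by rewrite cardsT (card_abelem_rV abP ntP).
Qed.

Lemma card_H1D : #|H1 p D rho| = (#|H1 p E K| * #|'Phi(D)|)%N.
Proof.
have hD := card_H1 rhoM; have hE := card_H1 (repr_mxM K).
rewrite card_Z1D -hE card_HomSet card_B1 in hD.
have pos : (0 < #|B1 p E K|)%N by rewrite cardG_gt0.
by apply/eqP; rewrite -(eqn_pmul2r pos) hD mulnAC.
Qed.

End Main.

Lemma setX_abelem (gT1 gT2 : finGroupType) p (A : {group gT1}) (B : {group gT2}) :
  prime p -> p.-abelem A -> p.-abelem B -> p.-abelem (setX A B).
Proof.
move=> pr /(abelemP pr) [cA eA] /(abelemP pr) [cB eB].
apply/abelemP => //; split.
  apply/centsP => [[a b]]; rewrite in_setX => /andP[aA bB] [c e].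
  rewrite in_setX => /andP[cA' eB']; rewrite /commute.
  by congr (_, _); [apply: (centsP cA) | apply: (centsP cB)].
move=> [a b]; rewrite in_setX => /andP[x1 x2]; set x := (a, b).
have pX k : (x ^+ k)%g = (x.1 ^+ k, x.2 ^+ k)%g.
  by elim: k => [|k IH] //; rewrite !expgS IH.
by rewrite pX eA ?eB.
Qed.

Theorem theorem3p9 (gT : finGroupType) (p d : nat) (D : {group gT})
    (n : nat) (K : mx_representation 'F_p (D / 'Phi(D))%G n) :
  prime p -> odd p -> (2 <= d)%N ->
  p.-group D -> exponent D = p -> nil_class D = 2%N ->
  #|D / 'Phi(D)| = (p ^ d)%N ->
  #|'Phi(D) / 'L_3(D)| = (p ^ 'C(d, 2))%N ->
  CR_module p (D / 'Phi(D))%G K ->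
  H1 p D (fun x => K (coset 'Phi(D) x))
    \isog setX (H1 p (D / 'Phi(D)) K) [set: Fp_space p 'C(d, 2)].
Proof.
move=> pr oddp d2 pD expD cl2 cE cP CR.
have L3 : 'L_3(D) = 1.
  by apply/(lcn_nil_classP 2 (pgroup_nil pD)); rewrite cl2.
rewrite L3 card_quotient ?norm1 ?subsetT // indexg1 in cP.
have gt1 := prime_gt1 pr.
have ntE : (D / 'Phi(D))%G :!=: 1.
  apply/eqP => E1; move: cE; rewrite E1 cards1 => e.
  have : (p ^ 1 <= p ^ d)%N by rewrite leq_exp2l // ltnW.
  by rewrite -e expn1 leqNgt gt1.
have ntP : 'Phi(D)%G :!=: 1.
  apply/eqP => P1; move: cP; rewrite /= P1 cards1 => e.
  have : (p ^ 1 <= p ^ 'C(d, 2))%N by rewrite leq_exp2l // bin_gt0.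
  by rewrite -e expn1 leqNgt gt1.
have abD : p.-abelem (H1 p D (fun x => K (coset 'Phi(D) x))).
  by apply: quotient_abelem; apply: cg_abelem.
rewrite (isog_abelem_card _ abD); apply/andP; split.
  apply: setX_abelem => //; first by apply: quotient_abelem; apply: cg_abelem.
  exact: mx_Fp_abelem.
rewrite cardsX cardsT (card_H1D pr oddp pD expD cl2 CR ntE ntP) cP.
by rewrite card_mx card_Fp // mul1n.
Qed.
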